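(* For all $y,k\in\mathbb N_0$, each of the following sets lies in $\mathcal L(C_2^5)$: \begin{enumerate} \item $y+2k+\{3,5,6,7\}+4\cdot[0,k]$; \item $y+2k+\{4,5,6,8\}+4\cdot[0,k]$; \item $y+2k+\{5,6,7,9,10,11\}+4\cdot[0,k]$; \item $y+2k+\{4,5,7,8,9\}+4\cdot[0,k]$; \item $y+2k+\{5,6,8,9,10,12\}+4\cdot[0,k]$; \item $y+2k+\{4,6,7,8,10\}+4\cdot[0,k]$. \end{enumerate}
   Context: $C_2^r$ denotes an elementary abelian $2$-group of rank $r$; $[a,b]=\{x\in\mathbb Z:a\le x\le b\}$. For $L,L'\subset\mathbb Z$ and $y,k\in\mathbb Z$: $L+L'=\{a+b:a\in L,b\in L'\}$, $y+L=\{y\}+L$, and $k\cdot L=\{ka:a\in L\}$ (so $4\cdot[0,k]=\{0,4,\dots,4k\}$). For a subset $G_0$ of a finite abelian group $G$, a sequence over $G_0$ is an element of the free abelian monoid $\mathcal F(G_0)$ with basis $G_0$ (a finite unordered list of elements of $G_0$, repetitions allowed). $\mathcal B(G_0)$ is the monoid of zero-sum sequences over $G_0$ (including the empty sequence). An atom is a minimal zero-sum sequence, i.e. a nonempty zero-sum sequence that is not a product of two nonempty zero-sum sequences. For $B\in\mathcal B(G_0)$, $\mathsf L(B)=\{k\in\mathbb N_0: B \text{ is a product of } k \text{ atoms}\}$, and $\mathcal L(G_0)=\{\mathsf L(B):B\in\mathcal B(G_0)\}$; $\mathcal L(G)$ is the case $G_0=G$. *)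

(* Defs.v *)
From HB Require Import structures.
From mathcomp Require Import all_boot all_order all_algebra.
Set Implicit Arguments. Unset Strict Implicit. Unset Printing Implicit Defensive.
Import GRing.Theory.
Local Open Scope ring_scope.

(* Sequences over a finite abelian group G: elements of the free abelian
   monoid F(G), represented by their multiplicity functions G -> nat. *)
Definition gseq (G : finZmodType) := {ffun G -> nat}.

Definition gseq_one (G : finZmodType) : gseq G := [ffun => 0%N].
Definition gseq_mul (G : finZmodType) (S T : gseq G) : gseq G :=
  [ffun g => (S g + T g)%N].
Definition gseq_prod (G : finZmodType) (s : seq (gseq G)) : gseq G :=
  foldr (@gseq_mul G) (gseq_one G) s.

Definition gseq_len (G : finZmodType) (S : gseq G) : nat := (\sum_(g : G) S g)%N.
Definition gseq_sum (G : finZmodType) (S : gseq G) : G := \sum_(g : G) g *+ S g.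

Definition zero_sum (G : finZmodType) (S : gseq G) : Prop := gseq_sum S = 0.

Definition atom (G : finZmodType) (A : gseq G) : Prop :=
  [/\ zero_sum A, (0 < gseq_len A)%N &
      ~ exists B C : gseq G, [/\ zero_sum B, zero_sum C, (0 < gseq_len B)%N,
                                 (0 < gseq_len C)%N & A = gseq_mul B C]].

Definition in_lengths (G : finZmodType) (B : gseq G) (k : nat) : Prop :=
  exists s : seq (gseq G), [/\ size s = k, (forall A, A \in s -> atom A) &
                                gseq_prod s = B].

Definition in_system_of_sets (G : finZmodType) (L : nat -> Prop) : Prop :=
  exists B : gseq G, zero_sum B /\ forall k, in_lengths B k <-> L k.

Definition shifted_set (y k : nat) (S : seq nat) (n : nat) : Prop :=
  exists s j, s \in S /\ (j <= k)%N /\ n = (y + 2 * k + s + 4 * j)%N.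

Definition C2_5 : finZmodType := 'rV['F_2]_5.

(* Main.v *)
Require Import Defs.
From mathcomp Require Import all_boot all_order all_algebra zify.
Import GRing.Theory.
Set Implicit Arguments. Unset Strict Implicit.
Local Open Scope ring_scope.

Definition rv (b : seq nat) : C2_5 := \row_(j < 5) ((nth 0%N b j)%:R : 'F_2).
Definition Gbits : seq (seq nat) :=
  [:: [:: 0;0;0;0;0]; [:: 1;0;0;0;0]; [:: 0;1;0;0;0]; [:: 0;0;1;0;0]; [:: 0;0;0;1;0];
      [:: 0;0;0;0;1]; [:: 1;1;1;1;1]; [:: 1;1;0;0;0]; [:: 0;0;1;1;0]]%N.
Definition G0s : seq C2_5 := map rv Gbits.

Lemma char2 : (2%N \in [char 'F_2]). Proof. exact: pchar_Fp. Qed.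

Lemma F2_nat n : ((n%:R : 'F_2) == 0) = ~~ odd n.
Proof. by rewrite -(dvdn_pcharf char2) dvdn2. Qed.

Lemma F2_odd n : (n%:R : 'F_2) = (odd n)%:R.
Proof.
by rewrite {1}(divn_eq n 2) natrD natrM (pchar_Fp_0 (p:=2)) // mulr0 add0r modn2.
Qed.

Lemma F2_10 : ((1%:R : 'F_2) == 0%:R) = false.
Proof. by rewrite oner_eq0. Qed.

Lemma rv_neq b b' (j : 'I_5) : odd (nth 0%N b j) != odd (nth 0%N b' j) -> rv b != rv b'.
Proof.
move=> Hj; apply/eqP => H; have := congr1 (fun M : C2_5 => M ord0 j) H.
rewrite !mxE (F2_odd (nth _ b j)) (F2_odd (nth _ b' j)); move: Hj.
case: (odd (nth 0%N b j)); case: (odd (nth 0%N b' j)) => //.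
Qed.
Ltac rvneq := first [ apply: (@rv_neq _ _ (@Ordinal 5 0 isT)); done
                    | apply: (@rv_neq _ _ (@Ordinal 5 1 isT)); done
                    | apply: (@rv_neq _ _ (@Ordinal 5 2 isT)); done
                    | apply: (@rv_neq _ _ (@Ordinal 5 3 isT)); done
                    | apply: (@rv_neq _ _ (@Ordinal 5 4 isT)); done ].

Lemma G0s_uniq : uniq G0s.
Proof.
rewrite /G0s /= !inE !negb_or.
repeat (apply/andP; split). all: try rvneq; done.
Qed.
Definition mk (v : seq nat) : gseq C2_5 :=
  [ffun g => if g \in G0s then nth 0%N v (index g G0s) else 0%N].

Lemma size_G0s : size G0s = 9%N. Proof. by []. Qed.

Lemma mk_nth v i : (i < 9)%N -> mk v (nth 0 G0s i) = nth 0%N v i.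
Proof.
move=> Hi; rewrite ffunE mem_nth ?size_G0s // index_uniq ?size_G0s //; exact: G0s_uniq.
Qed.

Lemma mk_out v g : g \notin G0s -> mk v g = 0%N.
Proof. by move=> H; rewrite ffunE (negbTE H). Qed.

Lemma sum_mk v : gseq_sum (mk v) = \sum_(i < 9) nth 0 G0s i *+ nth 0%N v i.
Proof.
rewrite /gseq_sum (bigID (mem G0s)) /= [X in _ + X]big1 ?addr0; last first.
  by move=> g H; rewrite mk_out.
rewrite -big_uniq ?G0s_uniq // (big_nth 0) size_G0s big_mkord.
by apply: eq_bigr => i _; rewrite mk_nth.
Qed.

Definition zsv (v : seq nat) : bool :=
  all (fun j => ~~ odd (sumn [seq (nth 0%N (nth [::] Gbits i) j * nth 0%N v i)%N | i <- iota 0 9]))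
      (iota 0 5).

Lemma sumn_iota (F : nat -> nat) n : sumn [seq F i | i <- iota 0 n] = (\sum_(i < n) F i)%N.
Proof. by rewrite sumnE big_map -(big_mkord xpredT) /index_iota subn0. Qed.

Lemma entry_sum v (j : 'I_5) : (\sum_(i < 9) nth 0 G0s i *+ nth 0%N v i) ord0 j =
   ((\sum_(i<9) nth 0%N (nth [::] Gbits i) j * nth 0%N v i)%N%:R : 'F_2).
Proof.
rewrite summxE natr_sum; apply: eq_bigr => i _.
by rewrite mulmxnE (nth_map [::]) ?size_G0s //= mxE natrM mulr_natr.
Qed.

Lemma zero_sum_mk v : zero_sum (mk v) <-> zsv v.
Proof.
rewrite /zero_sum sum_mk; split.
- move=> H; apply/allP => j; rewrite mem_iota add0n => /andP[_ Hj].
  have := congr1 (fun M : C2_5 => M ord0 (Ordinal Hj)) H.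
  by rewrite entry_sum mxE sumn_iota -F2_nat => ->.
- move/allP => H; apply/rowP => j; rewrite entry_sum mxE.
  have := H j; rewrite mem_iota add0n ltn_ord => /(_ isT).
  by rewrite sumn_iota -F2_nat => /eqP.
Qed.

Lemma sum_mul (B C : gseq C2_5) : gseq_sum (gseq_mul B C) = gseq_sum B + gseq_sum C.
Proof. by rewrite /gseq_sum -big_split; apply: eq_bigr => g _; rewrite ffunE mulrnDr. Qed.

Lemma len_mul (B C : gseq C2_5) : gseq_len (gseq_mul B C) = (gseq_len B + gseq_len C)%N.
Proof. by rewrite /gseq_len -big_split; apply: eq_bigr => g _; rewrite ffunE. Qed.

Lemma atom_split (A S : gseq C2_5) : atom A -> (forall g, S g <= A g)%N ->
  zero_sum S -> (0 < gseq_len S)%N -> A = S.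
Proof.
case=> zA lA nd Sle zS lS.
pose C : gseq C2_5 := [ffun g => (A g - S g)%N].
have AC : A = gseq_mul S C by apply/ffunP => g; rewrite !ffunE subnKC.
have zC : zero_sum C.
  by move: zA; rewrite /zero_sum AC sum_mul zS add0r.
case: (posnP (gseq_len C)) => lC.
  apply/ffunP => g; rewrite AC ffunE.
  have : C g = 0%N.
    move: lC; rewrite /gseq_len => /eqP; rewrite sum_nat_eq0 => /forallP /(_ g).
    by move/implyP/(_ isT)/eqP.
  by move=> ->; rewrite addn0.
by exfalso; apply: nd; exists S, C.
Qed.

Lemma len_mk v : gseq_len (mk v) = sumn [seq nth 0%N v i | i <- iota 0 9].
Proof.
rewrite (sumn_iota (nth 0%N v)) /gseq_len (bigID (mem G0s)) /= [X in (_ + X)%N]big1 ?addn0; last first.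
  by move=> g H; rewrite mk_out.
rewrite -big_uniq ?G0s_uniq // (big_nth 0) size_G0s big_mkord.
by apply: eq_bigr => i _; rewrite mk_nth.
Qed.

Definition addv (v w : seq nat) := [seq (nth 0 v i + nth 0 w i)%N | i <- iota 0 9].

Lemma nth_iota9 (F : nat -> nat) i : (i < 9)%N -> nth 0%N [seq F j | j <- iota 0 9] i = F i.
Proof. by move=> Hi; rewrite (nth_map 0%N) ?size_iota // nth_iota. Qed.

Lemma index_G0s g : g \in G0s -> (index g G0s < 9)%N.
Proof. by rewrite -index_mem. Qed.

Lemma mul_mk v w : gseq_mul (mk v) (mk w) = mk (addv v w).
Proof.
apply/ffunP => g; rewrite !ffunE.
case: ifP => H //; by rewrite nth_iota9 ?index_G0s.
Qed.

Lemma mk_ext v w : (forall i, (i < 9)%N -> nth 0%N v i = nth 0%N w i) -> mk v = mk w.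
Proof.
move=> H; apply/ffunP => g; rewrite !ffunE; case: ifP => // Hg; exact/H/index_G0s.
Qed.

Definition vec (A : gseq C2_5) := [seq A (nth 0 G0s i) | i <- iota 0 9].

Lemma mk_vec (A : gseq C2_5) : (forall g, g \notin G0s -> A g = 0%N) -> A = mk (vec A).
Proof.
move=> H; apply/ffunP => g; rewrite ffunE; case: ifP => Hg; last by rewrite H ?Hg.
rewrite (nth_map 0%N) ?size_iota ?index_G0s // nth_iota ?index_G0s // nth_index //.
Qed.

Lemma mk_le v w : (forall i, (i < 9)%N -> nth 0%N v i <= nth 0%N w i)%N ->
  forall g, (mk v g <= mk w g)%N.
Proof. move=> H g; rewrite !ffunE; case: ifP => // Hg; exact/H/index_G0s. Qed.

Lemma mk_ge_nth v (A : gseq C2_5) : (forall g, mk v g <= A g)%N -> forall i, (i < 9)%N -> (nth 0%N v i <= A (nth 0%R G0s i))%N.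
Proof. by move=> H i Hi; rewrite -mk_nth //. Qed.

Definition atv : seq (seq nat) := [::
  [:: 1;0;0;0;0;0;0;0;0]; [:: 0;2;0;0;0;0;0;0;0]; [:: 0;0;2;0;0;0;0;0;0];
  [:: 0;0;0;2;0;0;0;0;0]; [:: 0;0;0;0;2;0;0;0;0]; [:: 0;0;0;0;0;2;0;0;0];
  [:: 0;0;0;0;0;0;2;0;0]; [:: 0;0;0;0;0;0;0;2;0]; [:: 0;0;0;0;0;0;0;0;2];
  [:: 0;1;1;0;0;0;0;1;0]; [:: 0;0;0;1;1;0;0;0;1]; [:: 0;0;0;0;0;1;1;1;1];
  [:: 0;1;1;0;0;1;1;0;1]; [:: 0;0;0;1;1;1;1;1;0]; [:: 0;1;1;1;1;1;1;0;0]]%N.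

Definition mkat (i : nat) : gseq C2_5 := mk (nth [::] atv i).

Definition lenv (v : seq nat) := sumn [seq nth 0%N v i | i <- iota 0 9].
Definition lev (a v : seq nat) := all (fun i => nth 0%N a i <= nth 0%N v i)%N (iota 0 9).
Definition subv (a b : seq nat) := [seq (nth 0%N a i - nth 0%N b i)%N | i <- iota 0 9].

Fixpoint subvecs (a : seq nat) : seq (seq nat) :=
  if a is x :: a' then [seq y :: b | y <- iota 0 x.+1, b <- subvecs a'] else [:: [::]].

Lemma mem_subvecs a b : size b = size a -> (forall i, nth 0%N b i <= nth 0%N a i)%N ->
  b \in subvecs a.
Proof.
elim: a b => [|x a IH] [|y b] // Hs H.
have {}Hs : size b = size a by case: Hs.
apply/allpairsPdep; exists y, b; split => //.
  by rewrite mem_iota add0n ltnS (H 0%N).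
by apply: IH => // i; exact: (H i.+1).
Qed.

Lemma levP a v : lev a v -> forall g, (mk a g <= mk v g)%N.
Proof. by move/allP=> H; apply: mk_le => i Hi; apply: H; rewrite mem_iota add0n. Qed.

Lemma atv_ok : all (fun a => zsv a && (0 < lenv a)%N) atv.
Proof. by []. Qed.

Lemma mkat_zs i : (i < 15)%N -> zero_sum (mkat i) /\ (0 < gseq_len (mkat i))%N.
Proof.
move=> Hi; have /allP/(_ (nth [::] atv i)) := atv_ok.
rewrite mem_nth // => /(_ isT) /andP[H1 H2].
by split; [apply/zero_sum_mk | rewrite /mkat len_mk].
Qed.

Definition thr (i : nat) := if i == 0%N then 1%N else 2%N.
Definition caps01 := [seq (thr i).-1 | i <- iota 0 9].

Lemma cover_check : all (fun b => ~~ zsv b || (lenv b == 0%N) ||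
                        has (fun i => lev (nth [::] atv i) b) (iota 0 15)) (subvecs caps01).
Proof. by vm_compute. Qed.

Lemma sq_le v i : (i < 9)%N -> (thr i <= nth 0%N v i)%N -> lev (nth [::] atv i) v.
Proof.
move=> Hi; do 9 (case: i Hi => [|i] Hi; first by rewrite /thr /= => H; rewrite /lev /= H ?leq0n).
by [].
Qed.

Lemma size_vec A : size (vec A) = 9%N. Proof. by rewrite size_map size_iota. Qed.

Lemma vec_cover (A : gseq C2_5) : zero_sum (mk (vec A)) -> (0 < gseq_len (mk (vec A)))%N ->
  has (fun i => lev (nth [::] atv i) (vec A)) (iota 0 15).
Proof.
set v := vec A => zA lA.
case: (boolP (all (fun i => nth 0%N v i < thr i)%N (iota 0 9))) => H; last first.
  move: H; rewrite -has_predC => /hasP [i]; rewrite mem_iota add0n => Hi.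
  rewrite [predC _ _]/= -leqNgt => Hv.
  by apply/hasP; exists i; [rewrite mem_iota add0n (leq_trans Hi) | exact: sq_le].
have Hm : v \in subvecs caps01.
  apply: mem_subvecs; first by rewrite size_vec.
  move=> i; case: (ltnP i 9) => Hi; last by rewrite !nth_default ?size_vec.
  rewrite [nth _ caps01 _]nth_iota9 //; have := allP H i; rewrite mem_iota add0n Hi => /(_ isT).
  by case: (thr i).
case/orP: (allP cover_check v Hm) => [/orP[H1|H1]|] //.
  by move: H1; have /zero_sum_mk -> := zA.
by move: lA; rewrite len_mk -/(lenv v) (eqP H1).
Qed.

Lemma classify (A : gseq C2_5) : atom A -> (forall g, g \notin G0s -> A g = 0%N) ->
  exists2 i, (i < 15)%N & A = mkat i.
Proof.
move=> HA Hs; have AV := mk_vec Hs.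
have [zA lA _] := HA; rewrite AV in zA lA.
have /hasP [i] := vec_cover zA lA; rewrite mem_iota add0n => Hi Hle.
exists i => //; apply: (atom_split HA).
- by move=> g; rewrite AV; exact: levP Hle g.
- exact: (mkat_zs Hi).1.
- exact: (mkat_zs Hi).2.
Qed.

Lemma indec_check : all (fun a => (size a == 9%N) && all (fun b =>
   ~~ [&& zsv b, (0 < lenv b)%N, zsv (subv a b) & (0 < lenv (subv a b))%N]) (subvecs a)) atv.
Proof. by vm_compute. Qed.

Lemma mkat_atom i : (i < 15)%N -> atom (mkat i).
Proof.
move=> Hi; have [z l] := mkat_zs Hi; split => //.
case=> B [C [zB zC lB lC E]].
have := allP indec_check (nth [::] atv i); rewrite mem_nth // => /(_ isT) /andP[/eqP Hsz Hall].
move: E; rewrite /mkat; set a := nth [::] atv i => E.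
have Eg : forall g, mk a g = (B g + C g)%N by move=> g; rewrite E ffunE.
have supB : forall g, g \notin G0s -> B g = 0%N.
  by move=> g Hg; move: (Eg g); rewrite mk_out // => /esym/eqP; rewrite addn_eq0 => /andP[/eqP].
have supC : forall g, g \notin G0s -> C g = 0%N.
  by move=> g Hg; move: (Eg g); rewrite mk_out // => /esym/eqP; rewrite addn_eq0 => /andP[_ /eqP].
have BV := mk_vec supB; have CV := @mk_vec _ supC.
have CV' : C = mk (subv a (vec B)).
  rewrite CV; apply: mk_ext => j Hj; rewrite !nth_iota9 //.
  by move: (Eg (nth 0 G0s j)); rewrite mk_nth // => ->; rewrite addKn.
have Hm : vec B \in subvecs a.
  apply: mem_subvecs; first by rewrite size_vec Hsz.
  move=> j; case: (ltnP j 9) => Hj; last by rewrite !nth_default ?size_vec ?Hsz.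
  by rewrite nth_iota9 // -mk_nth // Eg leq_addr.
have := allP Hall _ Hm; rewrite -!/(lenv _).
rewrite BV in zB lB; rewrite CV' in zC lC.
move/zero_sum_mk: zB => ->; move/zero_sum_mk: zC => ->.
by move: lB lC; rewrite !len_mk => -> ->.
Qed.

Lemma sum_eqi x (F : nat -> nat) : (x < 15)%N ->
  (\sum_(i < 15) (x == i) * F i)%N = F x.
Proof.
move=> Hx; rewrite (bigD1 (Ordinal Hx)) //= eqxx mul1n big1 ?addn0 //.
move=> i Hi; suff /negbTE -> : x != i by [].
by apply: contra Hi => /eqP Hxi; apply/eqP/val_inj; rewrite /= Hxi.
Qed.

Lemma prod_mkat t : all (fun x => x < 15)%N t ->
  gseq_prod (map mkat t) =
  mk [seq (\sum_(i < 15) count_mem (i : nat) t * nth 0%N (nth [::] atv i) j)%N | j <- iota 0 9].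
Proof.
elim: t => [|x t IH].
  move=> _; apply/ffunP => g; rewrite !ffunE; case: ifP => // Hg.
  by rewrite nth_iota9 ?index_G0s // big1.
case/andP => Hx Ht.
have -> : gseq_prod (map mkat (x :: t)) = gseq_mul (mkat x) (gseq_prod (map mkat t)) by [].
rewrite IH // /mkat mul_mk; apply: mk_ext => j Hj.
rewrite !nth_iota9 //.
under [X in _ = X]eq_bigr => i _ do rewrite [count_mem _ _]/= mulnDl.
by rewrite big_split /= (sum_eqi (fun i => nth 0%N (nth [::] atv i) j)).
Qed.

Lemma size_cnt t : all (fun x => x < 15)%N t -> (\sum_(i < 15) count_mem (i : nat) t)%N = size t.
Proof.
elim: t => [|x t IH]; first by rewrite big1.
case/andP => Hx Ht.
under eq_bigr => i _ do rewrite [count_mem _ _]/=.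
rewrite big_split /= IH //.
have H1 : (\sum_(i < 15) (x == i) * 1)%N = 1%N := sum_eqi (fun _ => 1%N) Hx.
under eq_bigr => i _ do rewrite -[nat_of_bool _]muln1.
by rewrite H1 add1n.
Qed.

Lemma prod_le (s : seq (gseq C2_5)) A : A \in s -> forall g, (A g <= gseq_prod s g)%N.
Proof.
elim: s => [|x s IH] //=; rewrite inE => /orP [/eqP -> | H] g; rewrite ffunE.
  exact: leq_addr.
exact: leq_trans (IH H g) (leq_addl _ _).
Qed.

Definition S15 (F : nat -> nat) :=
  (F 0 + F 1 + F 2 + F 3 + F 4 + F 5 + F 6 + F 7 + F 8 + F 9 + F 10 + F 11 + F 12 + F 13 + F 14)%N.
Lemma sum15 (F : nat -> nat) : S15 F = (\sum_(i < 15) F i)%N.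
Proof. by rewrite !big_ord_recr big_ord0. Qed.

Lemma lengths_sub bv n : in_lengths (mk bv) n ->
  exists c : nat -> nat, n = S15 c /\
    forall j, (j < 9)%N -> S15 (fun i => c i * nth 0%N (nth [::] atv i) j)%N = nth 0%N bv j.
Proof.
case=> s [<- Hat Hp].
have Hcl : forall A, A \in s -> exists2 i, (i < 15)%N & A = mkat i.
  move=> A HA; apply: classify; first exact: Hat.
  move=> g Hg; apply/eqP; rewrite -leqn0; have := prod_le HA g.
  by rewrite Hp mk_out.
have [t Ht Hst] : exists2 t, all (fun x => x < 15)%N t & s = map mkat t.
  elim: s Hcl {Hat Hp} => [|A s IH] Hcl; first by exists [::].
  have [i Hi ->] := Hcl A (mem_head _ _).
  have [t Ht ->] : exists2 t, all (fun x => x < 15)%N t & s = map mkat t.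
    by apply: IH => B HB; apply: Hcl; rewrite inE HB orbT.
  by exists (i :: t); rewrite //= Hi.
exists (fun i => count_mem i t); split.
  by rewrite sum15 Hst size_map size_cnt.
move=> j Hj; rewrite sum15; move: Hp; rewrite Hst prod_mkat // => /ffunP /(_ (nth 0 G0s j)).
by rewrite !mk_nth // nth_iota9.
Qed.

Lemma count_flat (c : nat -> nat) i : (i < 15)%N ->
  count_mem i (flatten [seq nseq (c k) k | k <- iota 0 15]) = c i.
Proof.
move=> Hi; rewrite count_flatten -map_comp.
rewrite (sumn_iota (fun k => count_mem i (nseq (c k) k))).
under eq_bigr => k _ do rewrite /= count_nseq /= eq_sym.
by rewrite sum_eqi.
Qed.

Lemma lengths_sup bv (c : nat -> nat) n : n = S15 c ->
  (forall j, (j < 9)%N -> S15 (fun i => c i * nth 0%N (nth [::] atv i) j)%N = nth 0%N bv j) ->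
  in_lengths (mk bv) n.
Proof.
rewrite sum15 => -> H.
set t := flatten [seq nseq (c k) k | k <- iota 0 15].
have Ht : all (fun x => x < 15)%N t.
  apply/allP => x /flattenP [l /mapP [k]]; rewrite mem_iota add0n => Hk -> /nseqP [-> _] //.
exists (map mkat t); split.
- rewrite size_map -size_cnt //; apply: eq_bigr => i _; exact: count_flat.
- by move=> A /mapP [x Hx ->]; apply: mkat_atom; exact: (allP Ht).
- rewrite prod_mkat //; apply: mk_ext => j Hj; rewrite nth_iota9 // -H // sum15.
  by apply: eq_bigr => i _; rewrite count_flat.
Qed.

Lemma lengths_zs (B : gseq C2_5) n : in_lengths B n -> zero_sum B.
Proof.
case=> s [_ Hat <-]; elim: s Hat => [|A s IH] Hat /=.
  by rewrite /zero_sum /gseq_sum big1 // => g _; rewrite ffunE.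
rewrite /zero_sum sum_mul.
have [-> _ _] := Hat A (mem_head _ _).
by rewrite add0r; apply: IH => A1 HA1; apply: Hat; rewrite inE HA1 orbT.
Qed.
Local Close Scope ring_scope.

Lemma Tset1 y k n : (y + 2 * k + 3 <= n)%N -> (n <= y + 6 * k + 7)%N ->
  ((n - y - 2 * k) %% 4 != 0)%N -> shifted_set y k [:: 3; 5; 6; 7] n.
Proof.
move=> H1 H2 H3.
have [q [r [Hm Hr]]] : exists q r, (n - y - 2 * k = 4 * q + r /\ r < 4)%N.
  by exists ((n - y - 2 * k) %/ 4)%N, ((n - y - 2 * k) %% 4)%N; lia.
case: r Hm Hr => [|[|[|[|r]]]] Hm Hr //.
- by exfalso; lia.
- by exists 5, (q - 1)%N; rewrite !inE /=; lia.
- by exists 6, (q - 1)%N; rewrite !inE /=; lia.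
- case: (leqP (q - 0) k) => Hq.
    by exists 3, (q - 0)%N; rewrite !inE /=; lia.
  by exists 7, (q - 1)%N; rewrite !inE /=; lia.
Qed.

Definition bv1 y k : seq nat := [:: y; 2 + 2 * k; 2 + 2 * k; 2 + 2 * k; 2 + 2 * k; 3 + 2 * k; 3 + 2 * k; 1; 1]%N.
Lemma sup1 y k n : shifted_set y k [:: 3; 5; 6; 7] n -> in_lengths (mk (bv1 y k)) n.
Proof.
case=> s [j [Hs [Hj ->]]]; rewrite !inE in Hs.
case/orP: Hs => [/eqP -> | Hs].
  apply: (lengths_sup (c := fun i => nth 0%N [:: y; (0 + j); (0 + j); (0 + j); (0 + j); (0 + j); (0 + j); 0; 0; 0; 0; 1; 0; 0; (2 + 2 * (k - j))]%N i)); first by rewrite /S15 /=; lia.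
  move=> jj Hjj; do 9 (case: jj Hjj => [|jj] Hjj; first by rewrite /S15 /=; lia); by [].
case/orP: Hs => [/eqP -> | Hs].
  apply: (lengths_sup (c := fun i => nth 0%N [:: y; (0 + j); (0 + j); (0 + j); (0 + j); (1 + j); (1 + j); 0; 0; 1; 1; 0; 0; 0; (1 + 2 * (k - j))]%N i)); first by rewrite /S15 /=; lia.
  move=> jj Hjj; do 9 (case: jj Hjj => [|jj] Hjj; first by rewrite /S15 /=; lia); by [].
case/orP: Hs => [/eqP -> | Hs].
  apply: (lengths_sup (c := fun i => nth 0%N [:: y; (0 + j); (0 + j); (1 + j); (1 + j); (1 + j); (1 + j); 0; 0; 1; 0; 0; 1; 0; (0 + 2 * (k - j))]%N i)); first by rewrite /S15 /=; lia.
  move=> jj Hjj; do 9 (case: jj Hjj => [|jj] Hjj; first by rewrite /S15 /=; lia); by [].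
move/eqP: Hs => ->.
  apply: (lengths_sup (c := fun i => nth 0%N [:: y; (1 + j); (1 + j); (1 + j); (1 + j); (1 + j); (1 + j); 0; 0; 0; 0; 1; 0; 0; (0 + 2 * (k - j))]%N i)); first by rewrite /S15 /=; lia.
  move=> jj Hjj; do 9 (case: jj Hjj => [|jj] Hjj; first by rewrite /S15 /=; lia); by [].
Qed.

Lemma arith1 y k (c : nat -> nat) :
  (forall j, (j < 9)%N -> S15 (fun i => c i * nth 0%N (nth [::] atv i) j)%N = nth 0%N (bv1 y k) j) ->
  shifted_set y k [:: 3; 5; 6; 7] (S15 c).
Proof.
move=> H.
have E0 := H 0%N isT; have E1 := H 1%N isT; have E2 := H 2%N isT.
have E3 := H 3%N isT; have E4 := H 4%N isT; have E5 := H 5%N isT.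
have E6 := H 6%N isT; have E7 := H 7%N isT; have E8 := H 8%N isT.
move: {H} E0 E1 E2 E3 E4 E5 E6 E7 E8; rewrite /S15 /=.
move: (c 0) (c 1) (c 2) (c 3) (c 4) (c 5) (c 6) (c 7) (c 8) (c 9) (c 10) (c 11) (c 12) (c 13) (c 14) => c0 c1 c2 c3 c4 c5 c6 c7 c8 c9 c10 c11 c12 c13 c14 E0 E1 E2 E3 E4 E5 E6 E7 E8.
rewrite ?muln0 ?muln1 ?addn0 ?add0n in E0 E1 E2 E3 E4 E5 E6 E7 E8.
have [H9|H9] : c9 = 0%N \/ c9 = 1%N by lia.
all: have [H10|H10] : c10 = 0%N \/ c10 = 1%N by lia.
all: have [H11|H11] : c11 = 0%N \/ c11 = 1%N by lia.
all: have [H12|H12] : c12 = 0%N \/ c12 = 1%N by lia.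
all: have [H13|H13] : c13 = 0%N \/ c13 = 1%N by lia.
all: subst c9 c10 c11 c12 c13.
all: try (exfalso; lia).
all: have [q [Hq|Hq]] : exists q, c14 = (2 * q)%N \/ c14 = (2 * q + 1)%N by exists (c14 %/ 2)%N; lia.
all: subst c14.
all: try (exfalso; lia).
all: apply: Tset1; lia.
Qed.

Lemma main1 y k : in_system_of_sets C2_5 (shifted_set y k [:: 3; 5; 6; 7]).
Proof.
exists (mk (bv1 y k)); split.
  apply: (@lengths_zs _ (y + 2 * k + 3)%N); apply: sup1.
  by exists 3, 0%N; rewrite !inE /= addn0.
move=> n; split; last exact: sup1.
by case/lengths_sub => c [-> H]; apply: arith1.
Qed.

Lemma Tset2 y k n : (y + 2 * k + 4 <= n)%N -> (n <= y + 6 * k + 8)%N ->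
  ((n - y - 2 * k) %% 4 != 3)%N -> shifted_set y k [:: 4; 5; 6; 8] n.
Proof.
move=> H1 H2 H3.
have [q [r [Hm Hr]]] : exists q r, (n - y - 2 * k = 4 * q + r /\ r < 4)%N.
  by exists ((n - y - 2 * k) %/ 4)%N, ((n - y - 2 * k) %% 4)%N; lia.
case: r Hm Hr => [|[|[|[|r]]]] Hm Hr //.
- case: (leqP (q - 1) k) => Hq.
    by exists 4, (q - 1)%N; rewrite !inE /=; lia.
  by exists 8, (q - 2)%N; rewrite !inE /=; lia.
- by exists 5, (q - 1)%N; rewrite !inE /=; lia.
- by exists 6, (q - 1)%N; rewrite !inE /=; lia.
- by exfalso; lia.
Qed.

Definition bv2 y k : seq nat := [:: y; 3 + 2 * k; 3 + 2 * k; 3 + 2 * k; 3 + 2 * k; 2 + 2 * k; 2 + 2 * k; 1; 1]%N.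
Lemma sup2 y k n : shifted_set y k [:: 4; 5; 6; 8] n -> in_lengths (mk (bv2 y k)) n.
Proof.
case=> s [j [Hs [Hj ->]]]; rewrite !inE in Hs.
case/orP: Hs => [/eqP -> | Hs].
  apply: (lengths_sup (c := fun i => nth 0%N [:: y; (0 + j); (0 + j); (0 + j); (0 + j); (0 + j); (0 + j); 0; 0; 1; 1; 0; 0; 0; (2 + 2 * (k - j))]%N i)); first by rewrite /S15 /=; lia.
  move=> jj Hjj; do 9 (case: jj Hjj => [|jj] Hjj; first by rewrite /S15 /=; lia); by [].
case/orP: Hs => [/eqP -> | Hs].
  apply: (lengths_sup (c := fun i => nth 0%N [:: y; (0 + j); (0 + j); (1 + j); (1 + j); (0 + j); (0 + j); 0; 0; 1; 0; 0; 1; 0; (1 + 2 * (k - j))]%N i)); first by rewrite /S15 /=; lia.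
  move=> jj Hjj; do 9 (case: jj Hjj => [|jj] Hjj; first by rewrite /S15 /=; lia); by [].
case/orP: Hs => [/eqP -> | Hs].
  apply: (lengths_sup (c := fun i => nth 0%N [:: y; (1 + j); (1 + j); (1 + j); (1 + j); (0 + j); (0 + j); 0; 0; 0; 0; 1; 0; 0; (1 + 2 * (k - j))]%N i)); first by rewrite /S15 /=; lia.
  move=> jj Hjj; do 9 (case: jj Hjj => [|jj] Hjj; first by rewrite /S15 /=; lia); by [].
move/eqP: Hs => ->.
  apply: (lengths_sup (c := fun i => nth 0%N [:: y; (1 + j); (1 + j); (1 + j); (1 + j); (1 + j); (1 + j); 0; 0; 1; 1; 0; 0; 0; (0 + 2 * (k - j))]%N i)); first by rewrite /S15 /=; lia.
  move=> jj Hjj; do 9 (case: jj Hjj => [|jj] Hjj; first by rewrite /S15 /=; lia); by [].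
Qed.

Lemma arith2 y k (c : nat -> nat) :
  (forall j, (j < 9)%N -> S15 (fun i => c i * nth 0%N (nth [::] atv i) j)%N = nth 0%N (bv2 y k) j) ->
  shifted_set y k [:: 4; 5; 6; 8] (S15 c).
Proof.
move=> H.
have E0 := H 0%N isT; have E1 := H 1%N isT; have E2 := H 2%N isT.
have E3 := H 3%N isT; have E4 := H 4%N isT; have E5 := H 5%N isT.
have E6 := H 6%N isT; have E7 := H 7%N isT; have E8 := H 8%N isT.
move: {H} E0 E1 E2 E3 E4 E5 E6 E7 E8; rewrite /S15 /=.
move: (c 0) (c 1) (c 2) (c 3) (c 4) (c 5) (c 6) (c 7) (c 8) (c 9) (c 10) (c 11) (c 12) (c 13) (c 14) => c0 c1 c2 c3 c4 c5 c6 c7 c8 c9 c10 c11 c12 c13 c14 E0 E1 E2 E3 E4 E5 E6 E7 E8.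
rewrite ?muln0 ?muln1 ?addn0 ?add0n in E0 E1 E2 E3 E4 E5 E6 E7 E8.
have [H9|H9] : c9 = 0%N \/ c9 = 1%N by lia.
all: have [H10|H10] : c10 = 0%N \/ c10 = 1%N by lia.
all: have [H11|H11] : c11 = 0%N \/ c11 = 1%N by lia.
all: have [H12|H12] : c12 = 0%N \/ c12 = 1%N by lia.
all: have [H13|H13] : c13 = 0%N \/ c13 = 1%N by lia.
all: subst c9 c10 c11 c12 c13.
all: try (exfalso; lia).
all: have [q [Hq|Hq]] : exists q, c14 = (2 * q)%N \/ c14 = (2 * q + 1)%N by exists (c14 %/ 2)%N; lia.
all: subst c14.
all: try (exfalso; lia).
all: apply: Tset2; lia.
Qed.

Lemma main2 y k : in_system_of_sets C2_5 (shifted_set y k [:: 4; 5; 6; 8]).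
Proof.
exists (mk (bv2 y k)); split.
  apply: (@lengths_zs _ (y + 2 * k + 4)%N); apply: sup2.
  by exists 4, 0%N; rewrite !inE /= addn0.
move=> n; split; last exact: sup2.
by case/lengths_sub => c [-> H]; apply: arith2.
Qed.

Lemma Tset3 y k n : (y + 2 * k + 5 <= n)%N -> (n <= y + 6 * k + 11)%N ->
  ((n - y - 2 * k) %% 4 != 0)%N -> shifted_set y k [:: 5; 6; 7; 9; 10; 11] n.
Proof.
move=> H1 H2 H3.
have [q [r [Hm Hr]]] : exists q r, (n - y - 2 * k = 4 * q + r /\ r < 4)%N.
  by exists ((n - y - 2 * k) %/ 4)%N, ((n - y - 2 * k) %% 4)%N; lia.
case: r Hm Hr => [|[|[|[|r]]]] Hm Hr //.
- by exfalso; lia.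
- case: (leqP (q - 1) k) => Hq.
    by exists 5, (q - 1)%N; rewrite !inE /=; lia.
  by exists 9, (q - 2)%N; rewrite !inE /=; lia.
- case: (leqP (q - 1) k) => Hq.
    by exists 6, (q - 1)%N; rewrite !inE /=; lia.
  by exists 10, (q - 2)%N; rewrite !inE /=; lia.
- case: (leqP (q - 1) k) => Hq.
    by exists 7, (q - 1)%N; rewrite !inE /=; lia.
  by exists 11, (q - 2)%N; rewrite !inE /=; lia.
Qed.

Definition bv3 y k : seq nat := [:: y; 4 + 2 * k; 4 + 2 * k; 4 + 2 * k; 4 + 2 * k; 3 + 2 * k; 3 + 2 * k; 1; 1]%N.
Lemma sup3 y k n : shifted_set y k [:: 5; 6; 7; 9; 10; 11] n -> in_lengths (mk (bv3 y k)) n.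
Proof.
case=> s [j [Hs [Hj ->]]]; rewrite !inE in Hs.
case/orP: Hs => [/eqP -> | Hs].
  apply: (lengths_sup (c := fun i => nth 0%N [:: y; (0 + j); (0 + j); (0 + j); (0 + j); (0 + j); (0 + j); 0; 0; 1; 1; 0; 0; 0; (3 + 2 * (k - j))]%N i)); first by rewrite /S15 /=; lia.
  move=> jj Hjj; do 9 (case: jj Hjj => [|jj] Hjj; first by rewrite /S15 /=; lia); by [].
case/orP: Hs => [/eqP -> | Hs].
  apply: (lengths_sup (c := fun i => nth 0%N [:: y; (0 + j); (0 + j); (1 + j); (1 + j); (0 + j); (0 + j); 0; 0; 1; 0; 0; 1; 0; (2 + 2 * (k - j))]%N i)); first by rewrite /S15 /=; lia.
  move=> jj Hjj; do 9 (case: jj Hjj => [|jj] Hjj; first by rewrite /S15 /=; lia); by [].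
case/orP: Hs => [/eqP -> | Hs].
  apply: (lengths_sup (c := fun i => nth 0%N [:: y; (1 + j); (1 + j); (1 + j); (1 + j); (0 + j); (0 + j); 0; 0; 0; 0; 1; 0; 0; (2 + 2 * (k - j))]%N i)); first by rewrite /S15 /=; lia.
  move=> jj Hjj; do 9 (case: jj Hjj => [|jj] Hjj; first by rewrite /S15 /=; lia); by [].
case/orP: Hs => [/eqP -> | Hs].
  apply: (lengths_sup (c := fun i => nth 0%N [:: y; (1 + j); (1 + j); (1 + j); (1 + j); (1 + j); (1 + j); 0; 0; 1; 1; 0; 0; 0; (1 + 2 * (k - j))]%N i)); first by rewrite /S15 /=; lia.
  move=> jj Hjj; do 9 (case: jj Hjj => [|jj] Hjj; first by rewrite /S15 /=; lia); by [].
case/orP: Hs => [/eqP -> | Hs].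
  apply: (lengths_sup (c := fun i => nth 0%N [:: y; (1 + j); (1 + j); (2 + j); (2 + j); (1 + j); (1 + j); 0; 0; 1; 0; 0; 1; 0; (0 + 2 * (k - j))]%N i)); first by rewrite /S15 /=; lia.
  move=> jj Hjj; do 9 (case: jj Hjj => [|jj] Hjj; first by rewrite /S15 /=; lia); by [].
move/eqP: Hs => ->.
  apply: (lengths_sup (c := fun i => nth 0%N [:: y; (2 + j); (2 + j); (2 + j); (2 + j); (1 + j); (1 + j); 0; 0; 0; 0; 1; 0; 0; (0 + 2 * (k - j))]%N i)); first by rewrite /S15 /=; lia.
  move=> jj Hjj; do 9 (case: jj Hjj => [|jj] Hjj; first by rewrite /S15 /=; lia); by [].
Qed.

Lemma arith3 y k (c : nat -> nat) :
  (forall j, (j < 9)%N -> S15 (fun i => c i * nth 0%N (nth [::] atv i) j)%N = nth 0%N (bv3 y k) j) ->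
  shifted_set y k [:: 5; 6; 7; 9; 10; 11] (S15 c).
Proof.
move=> H.
have E0 := H 0%N isT; have E1 := H 1%N isT; have E2 := H 2%N isT.
have E3 := H 3%N isT; have E4 := H 4%N isT; have E5 := H 5%N isT.
have E6 := H 6%N isT; have E7 := H 7%N isT; have E8 := H 8%N isT.
move: {H} E0 E1 E2 E3 E4 E5 E6 E7 E8; rewrite /S15 /=.
move: (c 0) (c 1) (c 2) (c 3) (c 4) (c 5) (c 6) (c 7) (c 8) (c 9) (c 10) (c 11) (c 12) (c 13) (c 14) => c0 c1 c2 c3 c4 c5 c6 c7 c8 c9 c10 c11 c12 c13 c14 E0 E1 E2 E3 E4 E5 E6 E7 E8.
rewrite ?muln0 ?muln1 ?addn0 ?add0n in E0 E1 E2 E3 E4 E5 E6 E7 E8.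
have [H9|H9] : c9 = 0%N \/ c9 = 1%N by lia.
all: have [H10|H10] : c10 = 0%N \/ c10 = 1%N by lia.
all: have [H11|H11] : c11 = 0%N \/ c11 = 1%N by lia.
all: have [H12|H12] : c12 = 0%N \/ c12 = 1%N by lia.
all: have [H13|H13] : c13 = 0%N \/ c13 = 1%N by lia.
all: subst c9 c10 c11 c12 c13.
all: try (exfalso; lia).
all: have [q [Hq|Hq]] : exists q, c14 = (2 * q)%N \/ c14 = (2 * q + 1)%N by exists (c14 %/ 2)%N; lia.
all: subst c14.
all: try (exfalso; lia).
all: apply: Tset3; lia.
Qed.

Lemma main3 y k : in_system_of_sets C2_5 (shifted_set y k [:: 5; 6; 7; 9; 10; 11]).
Proof.
exists (mk (bv3 y k)); split.
  apply: (@lengths_zs _ (y + 2 * k + 5)%N); apply: sup3.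
  by exists 5, 0%N; rewrite !inE /= addn0.
move=> n; split; last exact: sup3.
by case/lengths_sub => c [-> H]; apply: arith3.
Qed.

Lemma Tset4 y k n : (y + 2 * k + 4 <= n)%N -> (n <= y + 6 * k + 9)%N ->
  ((n - y - 2 * k) %% 4 != 2)%N -> shifted_set y k [:: 4; 5; 7; 8; 9] n.
Proof.
move=> H1 H2 H3.
have [q [r [Hm Hr]]] : exists q r, (n - y - 2 * k = 4 * q + r /\ r < 4)%N.
  by exists ((n - y - 2 * k) %/ 4)%N, ((n - y - 2 * k) %% 4)%N; lia.
case: r Hm Hr => [|[|[|[|r]]]] Hm Hr //.
- case: (leqP (q - 1) k) => Hq.
    by exists 4, (q - 1)%N; rewrite !inE /=; lia.
  by exists 8, (q - 2)%N; rewrite !inE /=; lia.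
- case: (leqP (q - 1) k) => Hq.
    by exists 5, (q - 1)%N; rewrite !inE /=; lia.
  by exists 9, (q - 2)%N; rewrite !inE /=; lia.
- by exfalso; lia.
- by exists 7, (q - 1)%N; rewrite !inE /=; lia.
Qed.

Definition bv4 y k : seq nat := [:: y; 2 + 2 * k; 2 + 2 * k; 4 + 2 * k; 4 + 2 * k; 3 + 2 * k; 3 + 2 * k; 1; 1]%N.
Lemma sup4 y k n : shifted_set y k [:: 4; 5; 7; 8; 9] n -> in_lengths (mk (bv4 y k)) n.
Proof.
case=> s [j [Hs [Hj ->]]]; rewrite !inE in Hs.
case/orP: Hs => [/eqP -> | Hs].
  apply: (lengths_sup (c := fun i => nth 0%N [:: y; (0 + j); (0 + j); (0 + j); (0 + j); (0 + j); (0 + j); 0; 0; 0; 1; 0; 0; 1; (2 + 2 * (k - j))]%N i)); first by rewrite /S15 /=; lia.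
  move=> jj Hjj; do 9 (case: jj Hjj => [|jj] Hjj; first by rewrite /S15 /=; lia); by [].
case/orP: Hs => [/eqP -> | Hs].
  apply: (lengths_sup (c := fun i => nth 0%N [:: y; (0 + j); (0 + j); (1 + j); (1 + j); (0 + j); (0 + j); 0; 0; 0; 0; 1; 0; 0; (2 + 2 * (k - j))]%N i)); first by rewrite /S15 /=; lia.
  move=> jj Hjj; do 9 (case: jj Hjj => [|jj] Hjj; first by rewrite /S15 /=; lia); by [].
case/orP: Hs => [/eqP -> | Hs].
  apply: (lengths_sup (c := fun i => nth 0%N [:: y; (0 + j); (0 + j); (1 + j); (1 + j); (1 + j); (1 + j); 0; 0; 1; 1; 0; 0; 0; (1 + 2 * (k - j))]%N i)); first by rewrite /S15 /=; lia.
  move=> jj Hjj; do 9 (case: jj Hjj => [|jj] Hjj; first by rewrite /S15 /=; lia); by [].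
case/orP: Hs => [/eqP -> | Hs].
  apply: (lengths_sup (c := fun i => nth 0%N [:: y; (0 + j); (0 + j); (2 + j); (2 + j); (1 + j); (1 + j); 0; 0; 1; 0; 0; 1; 0; (0 + 2 * (k - j))]%N i)); first by rewrite /S15 /=; lia.
  move=> jj Hjj; do 9 (case: jj Hjj => [|jj] Hjj; first by rewrite /S15 /=; lia); by [].
move/eqP: Hs => ->.
  apply: (lengths_sup (c := fun i => nth 0%N [:: y; (1 + j); (1 + j); (2 + j); (2 + j); (1 + j); (1 + j); 0; 0; 0; 0; 1; 0; 0; (0 + 2 * (k - j))]%N i)); first by rewrite /S15 /=; lia.
  move=> jj Hjj; do 9 (case: jj Hjj => [|jj] Hjj; first by rewrite /S15 /=; lia); by [].
Qed.

Lemma arith4 y k (c : nat -> nat) :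
  (forall j, (j < 9)%N -> S15 (fun i => c i * nth 0%N (nth [::] atv i) j)%N = nth 0%N (bv4 y k) j) ->
  shifted_set y k [:: 4; 5; 7; 8; 9] (S15 c).
Proof.
move=> H.
have E0 := H 0%N isT; have E1 := H 1%N isT; have E2 := H 2%N isT.
have E3 := H 3%N isT; have E4 := H 4%N isT; have E5 := H 5%N isT.
have E6 := H 6%N isT; have E7 := H 7%N isT; have E8 := H 8%N isT.
move: {H} E0 E1 E2 E3 E4 E5 E6 E7 E8; rewrite /S15 /=.
move: (c 0) (c 1) (c 2) (c 3) (c 4) (c 5) (c 6) (c 7) (c 8) (c 9) (c 10) (c 11) (c 12) (c 13) (c 14) => c0 c1 c2 c3 c4 c5 c6 c7 c8 c9 c10 c11 c12 c13 c14 E0 E1 E2 E3 E4 E5 E6 E7 E8.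
rewrite ?muln0 ?muln1 ?addn0 ?add0n in E0 E1 E2 E3 E4 E5 E6 E7 E8.
have [H9|H9] : c9 = 0%N \/ c9 = 1%N by lia.
all: have [H10|H10] : c10 = 0%N \/ c10 = 1%N by lia.
all: have [H11|H11] : c11 = 0%N \/ c11 = 1%N by lia.
all: have [H12|H12] : c12 = 0%N \/ c12 = 1%N by lia.
all: have [H13|H13] : c13 = 0%N \/ c13 = 1%N by lia.
all: subst c9 c10 c11 c12 c13.
all: try (exfalso; lia).
all: have [q [Hq|Hq]] : exists q, c14 = (2 * q)%N \/ c14 = (2 * q + 1)%N by exists (c14 %/ 2)%N; lia.
all: subst c14.
all: try (exfalso; lia).
all: apply: Tset4; lia.
Qed.

Lemma main4 y k : in_system_of_sets C2_5 (shifted_set y k [:: 4; 5; 7; 8; 9]).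
Proof.
exists (mk (bv4 y k)); split.
  apply: (@lengths_zs _ (y + 2 * k + 4)%N); apply: sup4.
  by exists 4, 0%N; rewrite !inE /= addn0.
move=> n; split; last exact: sup4.
by case/lengths_sub => c [-> H]; apply: arith4.
Qed.

Lemma Tset5 y k n : (y + 2 * k + 5 <= n)%N -> (n <= y + 6 * k + 12)%N ->
  ((n - y - 2 * k) %% 4 != 3)%N -> shifted_set y k [:: 5; 6; 8; 9; 10; 12] n.
Proof.
move=> H1 H2 H3.
have [q [r [Hm Hr]]] : exists q r, (n - y - 2 * k = 4 * q + r /\ r < 4)%N.
  by exists ((n - y - 2 * k) %/ 4)%N, ((n - y - 2 * k) %% 4)%N; lia.
case: r Hm Hr => [|[|[|[|r]]]] Hm Hr //.
- case: (leqP (q - 2) k) => Hq.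
    by exists 8, (q - 2)%N; rewrite !inE /=; lia.
  by exists 12, (q - 3)%N; rewrite !inE /=; lia.
- case: (leqP (q - 1) k) => Hq.
    by exists 5, (q - 1)%N; rewrite !inE /=; lia.
  by exists 9, (q - 2)%N; rewrite !inE /=; lia.
- case: (leqP (q - 1) k) => Hq.
    by exists 6, (q - 1)%N; rewrite !inE /=; lia.
  by exists 10, (q - 2)%N; rewrite !inE /=; lia.
- by exfalso; lia.
Qed.

Definition bv5 y k : seq nat := [:: y; 3 + 2 * k; 3 + 2 * k; 5 + 2 * k; 5 + 2 * k; 4 + 2 * k; 4 + 2 * k; 1; 1]%N.
Lemma sup5 y k n : shifted_set y k [:: 5; 6; 8; 9; 10; 12] n -> in_lengths (mk (bv5 y k)) n.
Proof.
case=> s [j [Hs [Hj ->]]]; rewrite !inE in Hs.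
case/orP: Hs => [/eqP -> | Hs].
  apply: (lengths_sup (c := fun i => nth 0%N [:: y; (0 + j); (0 + j); (0 + j); (0 + j); (0 + j); (0 + j); 0; 0; 0; 1; 0; 0; 1; (3 + 2 * (k - j))]%N i)); first by rewrite /S15 /=; lia.
  move=> jj Hjj; do 9 (case: jj Hjj => [|jj] Hjj; first by rewrite /S15 /=; lia); by [].
case/orP: Hs => [/eqP -> | Hs].
  apply: (lengths_sup (c := fun i => nth 0%N [:: y; (0 + j); (0 + j); (1 + j); (1 + j); (0 + j); (0 + j); 0; 0; 0; 0; 1; 0; 0; (3 + 2 * (k - j))]%N i)); first by rewrite /S15 /=; lia.
  move=> jj Hjj; do 9 (case: jj Hjj => [|jj] Hjj; first by rewrite /S15 /=; lia); by [].
case/orP: Hs => [/eqP -> | Hs].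
  apply: (lengths_sup (c := fun i => nth 0%N [:: y; (0 + j); (0 + j); (1 + j); (1 + j); (1 + j); (1 + j); 0; 0; 1; 1; 0; 0; 0; (2 + 2 * (k - j))]%N i)); first by rewrite /S15 /=; lia.
  move=> jj Hjj; do 9 (case: jj Hjj => [|jj] Hjj; first by rewrite /S15 /=; lia); by [].
case/orP: Hs => [/eqP -> | Hs].
  apply: (lengths_sup (c := fun i => nth 0%N [:: y; (0 + j); (0 + j); (2 + j); (2 + j); (1 + j); (1 + j); 0; 0; 1; 0; 0; 1; 0; (1 + 2 * (k - j))]%N i)); first by rewrite /S15 /=; lia.
  move=> jj Hjj; do 9 (case: jj Hjj => [|jj] Hjj; first by rewrite /S15 /=; lia); by [].
case/orP: Hs => [/eqP -> | Hs].
  apply: (lengths_sup (c := fun i => nth 0%N [:: y; (1 + j); (1 + j); (2 + j); (2 + j); (1 + j); (1 + j); 0; 0; 0; 0; 1; 0; 0; (1 + 2 * (k - j))]%N i)); first by rewrite /S15 /=; lia.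
  move=> jj Hjj; do 9 (case: jj Hjj => [|jj] Hjj; first by rewrite /S15 /=; lia); by [].
move/eqP: Hs => ->.
  apply: (lengths_sup (c := fun i => nth 0%N [:: y; (1 + j); (1 + j); (2 + j); (2 + j); (2 + j); (2 + j); 0; 0; 1; 1; 0; 0; 0; (0 + 2 * (k - j))]%N i)); first by rewrite /S15 /=; lia.
  move=> jj Hjj; do 9 (case: jj Hjj => [|jj] Hjj; first by rewrite /S15 /=; lia); by [].
Qed.

Lemma arith5 y k (c : nat -> nat) :
  (forall j, (j < 9)%N -> S15 (fun i => c i * nth 0%N (nth [::] atv i) j)%N = nth 0%N (bv5 y k) j) ->
  shifted_set y k [:: 5; 6; 8; 9; 10; 12] (S15 c).
Proof.
move=> H.
have E0 := H 0%N isT; have E1 := H 1%N isT; have E2 := H 2%N isT.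
have E3 := H 3%N isT; have E4 := H 4%N isT; have E5 := H 5%N isT.
have E6 := H 6%N isT; have E7 := H 7%N isT; have E8 := H 8%N isT.
move: {H} E0 E1 E2 E3 E4 E5 E6 E7 E8; rewrite /S15 /=.
move: (c 0) (c 1) (c 2) (c 3) (c 4) (c 5) (c 6) (c 7) (c 8) (c 9) (c 10) (c 11) (c 12) (c 13) (c 14) => c0 c1 c2 c3 c4 c5 c6 c7 c8 c9 c10 c11 c12 c13 c14 E0 E1 E2 E3 E4 E5 E6 E7 E8.
rewrite ?muln0 ?muln1 ?addn0 ?add0n in E0 E1 E2 E3 E4 E5 E6 E7 E8.
have [H9|H9] : c9 = 0%N \/ c9 = 1%N by lia.
all: have [H10|H10] : c10 = 0%N \/ c10 = 1%N by lia.
all: have [H11|H11] : c11 = 0%N \/ c11 = 1%N by lia.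
all: have [H12|H12] : c12 = 0%N \/ c12 = 1%N by lia.
all: have [H13|H13] : c13 = 0%N \/ c13 = 1%N by lia.
all: subst c9 c10 c11 c12 c13.
all: try (exfalso; lia).
all: have [q [Hq|Hq]] : exists q, c14 = (2 * q)%N \/ c14 = (2 * q + 1)%N by exists (c14 %/ 2)%N; lia.
all: subst c14.
all: try (exfalso; lia).
all: apply: Tset5; lia.
Qed.

Lemma main5 y k : in_system_of_sets C2_5 (shifted_set y k [:: 5; 6; 8; 9; 10; 12]).
Proof.
exists (mk (bv5 y k)); split.
  apply: (@lengths_zs _ (y + 2 * k + 5)%N); apply: sup5.
  by exists 5, 0%N; rewrite !inE /= addn0.
move=> n; split; last exact: sup5.
by case/lengths_sub => c [-> H]; apply: arith5.
Qed.

Lemma Tset6 y k n : (y + 2 * k + 4 <= n)%N -> (n <= y + 6 * k + 10)%N ->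
  ((n - y - 2 * k) %% 4 != 1)%N -> shifted_set y k [:: 4; 6; 7; 8; 10] n.
Proof.
move=> H1 H2 H3.
have [q [r [Hm Hr]]] : exists q r, (n - y - 2 * k = 4 * q + r /\ r < 4)%N.
  by exists ((n - y - 2 * k) %/ 4)%N, ((n - y - 2 * k) %% 4)%N; lia.
case: r Hm Hr => [|[|[|[|r]]]] Hm Hr //.
- case: (leqP (q - 1) k) => Hq.
    by exists 4, (q - 1)%N; rewrite !inE /=; lia.
  by exists 8, (q - 2)%N; rewrite !inE /=; lia.
- by exfalso; lia.
- case: (leqP (q - 1) k) => Hq.
    by exists 6, (q - 1)%N; rewrite !inE /=; lia.
  by exists 10, (q - 2)%N; rewrite !inE /=; lia.
- by exists 7, (q - 1)%N; rewrite !inE /=; lia.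
Qed.

Definition bv6 y k : seq nat := [:: y; 3 + 2 * k; 3 + 2 * k; 3 + 2 * k; 3 + 2 * k; 4 + 2 * k; 4 + 2 * k; 1; 1]%N.
Lemma sup6 y k n : shifted_set y k [:: 4; 6; 7; 8; 10] n -> in_lengths (mk (bv6 y k)) n.
Proof.
case=> s [j [Hs [Hj ->]]]; rewrite !inE in Hs.
case/orP: Hs => [/eqP -> | Hs].
  apply: (lengths_sup (c := fun i => nth 0%N [:: y; (0 + j); (0 + j); (0 + j); (0 + j); (0 + j); (0 + j); 0; 0; 0; 0; 1; 0; 0; (3 + 2 * (k - j))]%N i)); first by rewrite /S15 /=; lia.
  move=> jj Hjj; do 9 (case: jj Hjj => [|jj] Hjj; first by rewrite /S15 /=; lia); by [].
case/orP: Hs => [/eqP -> | Hs].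
  apply: (lengths_sup (c := fun i => nth 0%N [:: y; (0 + j); (0 + j); (0 + j); (0 + j); (1 + j); (1 + j); 0; 0; 1; 1; 0; 0; 0; (2 + 2 * (k - j))]%N i)); first by rewrite /S15 /=; lia.
  move=> jj Hjj; do 9 (case: jj Hjj => [|jj] Hjj; first by rewrite /S15 /=; lia); by [].
case/orP: Hs => [/eqP -> | Hs].
  apply: (lengths_sup (c := fun i => nth 0%N [:: y; (0 + j); (0 + j); (1 + j); (1 + j); (1 + j); (1 + j); 0; 0; 1; 0; 0; 1; 0; (1 + 2 * (k - j))]%N i)); first by rewrite /S15 /=; lia.
  move=> jj Hjj; do 9 (case: jj Hjj => [|jj] Hjj; first by rewrite /S15 /=; lia); by [].
case/orP: Hs => [/eqP -> | Hs].
  apply: (lengths_sup (c := fun i => nth 0%N [:: y; (1 + j); (1 + j); (1 + j); (1 + j); (1 + j); (1 + j); 0; 0; 0; 0; 1; 0; 0; (1 + 2 * (k - j))]%N i)); first by rewrite /S15 /=; lia.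
  move=> jj Hjj; do 9 (case: jj Hjj => [|jj] Hjj; first by rewrite /S15 /=; lia); by [].
move/eqP: Hs => ->.
  apply: (lengths_sup (c := fun i => nth 0%N [:: y; (1 + j); (1 + j); (1 + j); (1 + j); (2 + j); (2 + j); 0; 0; 1; 1; 0; 0; 0; (0 + 2 * (k - j))]%N i)); first by rewrite /S15 /=; lia.
  move=> jj Hjj; do 9 (case: jj Hjj => [|jj] Hjj; first by rewrite /S15 /=; lia); by [].
Qed.

Lemma arith6 y k (c : nat -> nat) :
  (forall j, (j < 9)%N -> S15 (fun i => c i * nth 0%N (nth [::] atv i) j)%N = nth 0%N (bv6 y k) j) ->
  shifted_set y k [:: 4; 6; 7; 8; 10] (S15 c).
Proof.
move=> H.
have E0 := H 0%N isT; have E1 := H 1%N isT; have E2 := H 2%N isT.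
have E3 := H 3%N isT; have E4 := H 4%N isT; have E5 := H 5%N isT.
have E6 := H 6%N isT; have E7 := H 7%N isT; have E8 := H 8%N isT.
move: {H} E0 E1 E2 E3 E4 E5 E6 E7 E8; rewrite /S15 /=.
move: (c 0) (c 1) (c 2) (c 3) (c 4) (c 5) (c 6) (c 7) (c 8) (c 9) (c 10) (c 11) (c 12) (c 13) (c 14) => c0 c1 c2 c3 c4 c5 c6 c7 c8 c9 c10 c11 c12 c13 c14 E0 E1 E2 E3 E4 E5 E6 E7 E8.
rewrite ?muln0 ?muln1 ?addn0 ?add0n in E0 E1 E2 E3 E4 E5 E6 E7 E8.
have [H9|H9] : c9 = 0%N \/ c9 = 1%N by lia.
all: have [H10|H10] : c10 = 0%N \/ c10 = 1%N by lia.
all: have [H11|H11] : c11 = 0%N \/ c11 = 1%N by lia.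
all: have [H12|H12] : c12 = 0%N \/ c12 = 1%N by lia.
all: have [H13|H13] : c13 = 0%N \/ c13 = 1%N by lia.
all: subst c9 c10 c11 c12 c13.
all: try (exfalso; lia).
all: have [q [Hq|Hq]] : exists q, c14 = (2 * q)%N \/ c14 = (2 * q + 1)%N by exists (c14 %/ 2)%N; lia.
all: subst c14.
all: try (exfalso; lia).
all: apply: Tset6; lia.
Qed.

Lemma main6 y k : in_system_of_sets C2_5 (shifted_set y k [:: 4; 6; 7; 8; 10]).
Proof.
exists (mk (bv6 y k)); split.
  apply: (@lengths_zs _ (y + 2 * k + 4)%N); apply: sup6.
  by exists 4, 0%N; rewrite !inE /= addn0.
move=> n; split; last exact: sup6.
by case/lengths_sub => c [-> H]; apply: arith6.
Qed.

Theorem lemma3p9 (y k : nat) :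
  in_system_of_sets C2_5 (shifted_set y k [:: 3; 5; 6; 7]) /\
  in_system_of_sets C2_5 (shifted_set y k [:: 4; 5; 6; 8]) /\
  in_system_of_sets C2_5 (shifted_set y k [:: 5; 6; 7; 9; 10; 11]) /\
  in_system_of_sets C2_5 (shifted_set y k [:: 4; 5; 7; 8; 9]) /\
  in_system_of_sets C2_5 (shifted_set y k [:: 5; 6; 8; 9; 10; 12]) /\
  in_system_of_sets C2_5 (shifted_set y k [:: 4; 6; 7; 8; 10]).
Proof.
split; first exact: main1.
split; first exact: main2.
split; first exact: main3.
split; first exact: main4.
split; first exact: main5.
exact: main6.
Qed.
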